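(* Let $\mathcal{M}$, $f,h_1,h_2,\psi$ be as in the context, and let $\{(x_k,y_k,z_k,\lambda_k,\gamma_k,\sigma_k)\}$ be any sequence generated by Algorithm ALM described in the context (i.e., at every iteration a point $x_k$ satisfying the subproblem conditions is found). Then $$\lim_{k\to\infty}\big(\|h_1(x_k)-y_k\|_2+\|h_2(x_k)-z_k\|_2\big)=0.$$ Consequently, if $x_*\in\mathcal{M}$ is an accumulation point of $\{x_k\}$, then $(x_*,h_1(x_* ),h_2(x_* ))$ is a feasible accumulation point of $\{(x_k,y_k,z_k)\}$ (feasible meaning $h_2(x_* )\le 0$). Moreover, $\{x_k\}$ always has an accumulation point if $\mathcal{M}$ is compact.
   Context: Standing assumptions: $\mathcal{M}$ is a complete smooth Riemannian manifold; $f:\mathcal{M}\to\mathbb{R}$, $h_1:\mathcal{M}\to\mathbb{R}^m$, $h_2:\mathcal{M}\to\mathbb{R}^q$ are continuously differentiable; $\psi:\mathbb{R}^m\to\mathbb{R}$ is convex; and $f(x)+\psi(y)$ is bounded below on $\mathcal{M}\times\mathbb{R}^m$. The problem is $\min\{f(x)+\psi(h_1(x))\}$ s.t. $x\in\mathcal{M}$, $h_2(x)\le 0$, reformulated as $\min f(x)+\psi(y)$ s.t. $x\in\mathcal{M}$, $y=h_1(x)$, $z=h_2(x)$, $z\le 0$. For a closed proper convex $g$ on $\mathbb{R}^n$ and $\sigma>0$: $g^\sigma(u):=\min_w\{g(w)+\frac{\sigma}{2}\|u-w\|_2^2\}$ (Moreau–Yosida regularization) and $\mathrm{prox}_{g/\sigma}(u):=\arg\min_w\{g(w)+\frac{\sigma}{2}\|u-w\|_2^2\}$.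 $\delta_{\mathbb{R}^q_-}$ is the indicator of $\mathbb{R}^q_-=\{z\le 0\}$ and $\Pi_{\mathbb{R}^q_-}$ the Euclidean projection onto it. The augmented Lagrangian is $L_\sigma(x,y,z,\lambda,\gamma)=f(x)+\psi(y)+\frac{\sigma}{2}\|h_1(x)-y+\lambda/\sigma\|_2^2+\frac{\sigma}{2}\|h_2(x)-z+\gamma/\sigma\|_2^2-\frac{\|\lambda\|_2^2+\|\gamma\|_2^2}{2\sigma}$. Algorithm ALM: choose $x_0\in\mathcal{M}$, $\gamma_0\in\mathbb{R}^q_+$, $\lambda_0\in\mathbb{R}^m$, $\sigma_0>0$, $\alpha,\tau\in(0,1)$, $\rho>1$, and a sequence $\varepsilon_k\ge 0$ with $\varepsilon_k\to 0$. Let $y_0=\mathrm{prox}_{\psi/\sigma_0}(h_1(x_0)+\lambda_0/\sigma_0)$, $z_0=\Pi_{\mathbb{R}^q_-}(h_2(x_0)+\gamma_0/\sigma_0)$, $\delta_0=\max\{\|h_1(x_0)-y_0\|_2,\|h_2(x_0)-z_0\|_2\}$. Choose a feasible $x_{\rm feas}\in\mathcal{M}$ ($h_2(x_{\rm feas})\le0$) and $\Phi\ge\max\{f(x_{\rm feas})+\psi(h_1(x_{\rm feas})),L_{\sigma_0}(x_0,y_0,z_0,\lambda_0,\gamma_0)\}$. For $k=1,2,\dots$ (with current values $\lambda_k,\gamma_k,\sigma_k$; at $k=1$ these are $\lambda_0,\gamma_0,\sigma_0$): (i) find $x_k\in\mathcal{M}$ with $\|\mathrm{grad}\,L_k(x_k)\|<\varepsilon_k$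 and $L_k(x_k)\le\Phi$, where $L_k(x)=f(x)+\psi^{\sigma_k}(h_1(x)+\lambda_k/\sigma_k)+\delta^{\sigma_k}_{\mathbb{R}^q_-}(h_2(x)+\gamma_k/\sigma_k)$ and $\mathrm{grad}$ is the Riemannian gradient; (ii) $y_k=\mathrm{prox}_{\psi/\sigma_k}(h_1(x_k)+\lambda_k/\sigma_k)$, $z_k=\Pi_{\mathbb{R}^q_-}(h_2(x_k)+\gamma_k/\sigma_k)$; (iii) $\lambda_{k+1}=\lambda_k+\sigma_k(h_1(x_k)-y_k)$, $\gamma_{k+1}=\gamma_k+\sigma_k(h_2(x_k)-z_k)$; (iv) $\delta_k=\max\{\|h_1(x_k)-y_k\|_2,\|h_2(x_k)-z_k\|_2\}$; if $\delta_k\le\tau\delta_{k-1}$ then $\sigma_{k+1}=\sigma_k$, otherwise $\sigma_{k+1}=\max\{\rho\sigma_k,\|\lambda_{k+1}\|_2^{1+\alpha},\|\gamma_{k+1}\|_2^{1+\alpha}\}$. *)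

(* Defs.v *)
From HB Require Import structures.
From mathcomp Require Import all_boot all_order all_algebra.
From mathcomp Require Import all_classical all_reals all_analysis.
Set Implicit Arguments.
Unset Strict Implicit.
Unset Printing Implicit Defensive.
Import Order.TTheory GRing.Theory Num.Theory.
Import numFieldNormedType.Exports.
Local Open Scope classical_set_scope.
Local Open Scope ring_scope.

Definition norm2 (R : realType) (n : nat) (v : 'rV[R]_n) : R :=
  Num.sqrt (\sum_(i < n) (v ord0 i) ^+ 2).

Definition nonpos (R : realType) (n : nat) (v : 'rV[R]_n) : Prop :=
  forall i, v ord0 i <= 0.

Definition convex_fun (R : realType) (n : nat) (g : 'rV[R]_n -> R) : Prop :=
  forall (u v : 'rV[R]_n) (t : R), 0 <= t -> t <= 1 ->
    g (t *: u + (1 - t) *: v) <= t * g u + (1 - t) * g v.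

Definition moreau (R : realType) (n : nat) (g : 'rV[R]_n -> R) (s : R)
  (u : 'rV[R]_n) : R :=
  inf [set g w + s / 2 * (norm2 (u - w)) ^+ 2 | w in [set: 'rV[R]_n]].

Definition is_prox (R : realType) (n : nat) (g : 'rV[R]_n -> R) (s : R)
  (u p : 'rV[R]_n) : Prop :=
  forall w, g p + s / 2 * (norm2 (u - p)) ^+ 2 <= g w + s / 2 * (norm2 (u - w)) ^+ 2.

Definition moreau_nonpos (R : realType) (n : nat) (s : R) (u : 'rV[R]_n) : R :=
  inf [set s / 2 * (norm2 (u - w)) ^+ 2 | w in @nonpos R n].

Definition is_proj_nonpos (R : realType) (n : nat) (u p : 'rV[R]_n) : Prop :=
  nonpos p /\ forall w, nonpos w -> norm2 (u - p) <= norm2 (u - w).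

Definition aug_lag (R : realType) (M : Type) (m q : nat) (f : M -> R)
  (psi : 'rV[R]_m -> R) (h1 : M -> 'rV[R]_m) (h2 : M -> 'rV[R]_q)
  (s : R) (x : M) (y : 'rV[R]_m) (z : 'rV[R]_q) (lam : 'rV[R]_m) (gam : 'rV[R]_q) : R :=
  f x + psi y + s / 2 * (norm2 (h1 x - y + s^-1 *: lam)) ^+ 2
      + s / 2 * (norm2 (h2 x - z + s^-1 *: gam)) ^+ 2
      - ((norm2 lam) ^+ 2 + (norm2 gam) ^+ 2) / (2 * s).

Definition subprob (R : realType) (M : Type) (m q : nat) (f : M -> R)
  (psi : 'rV[R]_m -> R) (h1 : M -> 'rV[R]_m) (h2 : M -> 'rV[R]_q)
  (s : R) (lam : 'rV[R]_m) (gam : 'rV[R]_q) (x : M) : R :=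
  f x + moreau psi s (h1 x + s^-1 *: lam) + moreau_nonpos s (h2 x + s^-1 *: gam).

Definition alm_delta (R : realType) (M : Type) (m q : nat)
  (h1 : M -> 'rV[R]_m) (h2 : M -> 'rV[R]_q)
  (x : nat -> M) (y : nat -> 'rV[R]_m) (z : nat -> 'rV[R]_q) (k : nat) : R :=
  Num.max (norm2 (h1 (x k) - y k)) (norm2 (h2 (x k) - z k)).

Definition acc_point (T : topologicalType) (u : nat -> T) (a : T) : Prop :=
  exists phi : nat -> nat, (forall n, (phi n < phi n.+1)%N) /\
    (fun n => u (phi n)) @ \oo --> a.

(* Main.v *)
Require Import Defs.
From HB Require Import structures.
From mathcomp Require Import all_boot all_order all_algebra.
From mathcomp Require Import all_classical all_reals all_analysis.

From mathcomp Require Import ring lra zify.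
Import Order.TTheory GRing.Theory Num.Theory.
Import numFieldNormedType.Exports.
Local Open Scope classical_set_scope.
Local Open Scope ring_scope.

Section H.
Context {R : realType}.

Lemma norm2_ge0 {n} (v : 'rV[R]_n) : 0 <= norm2 v.
Proof. exact: sqrtr_ge0. Qed.

Lemma norm2_sq {n} (v : 'rV[R]_n) : norm2 v ^+ 2 = \sum_(i < n) (v ord0 i) ^+ 2.
Proof. by rewrite /norm2 sqr_sqrtr // sumr_ge0 // => i _; exact: sqr_ge0. Qed.

Lemma entry_sq_le {n} (v : 'rV[R]_n) i : (v ord0 i) ^+ 2 <= norm2 v ^+ 2.
Proof.
rewrite norm2_sq (bigD1 i) //= lerDl sumr_ge0 // => j _; exact: sqr_ge0.
Qed.

Lemma entry_le_norm2 {n} (v : 'rV[R]_n) i : `|v ord0 i| <= norm2 v.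
Proof.
rewrite -sqrtr_sqr -[norm2 v]ger0_norm ?norm2_ge0 // -(sqrtr_sqr (norm2 v)).
by rewrite ler_sqrt ?sqr_ge0 // entry_sq_le.
Qed.

Lemma norm2_le {n} (v : 'rV[R]_n) (B : R) : (forall i, (v ord0 i) ^+ 2 <= B) ->
  norm2 v <= Num.sqrt (n%:R * B).
Proof.
move=> H; rewrite /norm2 ler_sqrt; last first.
  case: n v H => [|n] v H; first by rewrite mul0r.
  by rewrite mulr_ge0 // (le_trans (sqr_ge0 (v ord0 ord0))).
apply: le_trans (ler_sum _ (fun i _ => H i)) _.
by rewrite sumr_const card_ord mulr_natl.
Qed.

Lemma mxnorm_le {n} (v : 'rV[R]_n) (e : R) : 0 <= e ->
  (forall i, `|v ord0 i| <= e) -> `|v| <= e.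
Proof.
move=> e0 H; rewrite (_ : `|v| = mx_norm v) // mx_normrE.
apply/bigmax_leP; split => // -[a b] _ /=.
by rewrite (ord1 a); exact: H.
Qed.

Lemma entry_le_mxnorm {n} (v : 'rV[R]_n) i : `|v ord0 i| <= `|v|.
Proof.
rewrite (_ : `|v| = mx_norm v) // mx_normrE.
by apply/bigmax_geP; right; exists (ord0, i).
Qed.

Lemma mxnorm_le_norm2 {n} (v : 'rV[R]_n) : `|v| <= norm2 v.
Proof. apply: mxnorm_le; [exact: norm2_ge0| exact: entry_le_norm2]. Qed.

End H.
Theorem theorem3p1 (R : realType) (M : pseudoMetricType R) (m q : nat)
  (f : M -> R) (h1 : M -> 'rV[R]_m) (h2 : M -> 'rV[R]_q) (psi : 'rV[R]_m -> R)
  (rgrad_norm : (M -> R) -> M -> R)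
  (Hf : continuous f) (Hh1 : continuous h1) (Hh2 : continuous h2)
  (Hpsi : convex_fun psi)
  (Hbdd : exists c : R, forall (x : M) (y : 'rV[R]_m), c <= f x + psi y)
  (alpha tau rho Phi : R) (eps : nat -> R) (xfeas : M)
  (x : nat -> M) (y : nat -> 'rV[R]_m) (z : nat -> 'rV[R]_q)
  (lam : nat -> 'rV[R]_m) (gam : nat -> 'rV[R]_q) (sig : nat -> R)
  (Halpha : 0 < alpha < 1) (Htau : 0 < tau < 1) (Hrho : 1 < rho)
  (Hsig0 : 0 < sig 0%N)
  (Heps : forall k, 0 <= eps k) (Heps0 : eps @ \oo --> 0)
  (Hgam0 : forall i, 0 <= gam 0%N ord0 i)
  (Hlam1 : lam 1%N = lam 0%N) (Hgam1 : gam 1%N = gam 0%N) (Hsig1 : sig 1%N = sig 0%N)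
  (Hy : forall k, is_prox psi (sig k) (h1 (x k) + (sig k)^-1 *: lam k) (y k))
  (Hz : forall k, is_proj_nonpos (h2 (x k) + (sig k)^-1 *: gam k) (z k))
  (Hfeas : nonpos (h2 xfeas))
  (HPhi1 : f xfeas + psi (h1 xfeas) <= Phi)
  (HPhi2 : aug_lag f psi h1 h2 (sig 0%N) (x 0%N) (y 0%N) (z 0%N) (lam 0%N) (gam 0%N) <= Phi)
  (Hsub : forall k, (0 < k)%N ->
     rgrad_norm (subprob f psi h1 h2 (sig k) (lam k) (gam k)) (x k) < eps k /\
     subprob f psi h1 h2 (sig k) (lam k) (gam k) (x k) <= Phi)
  (Hlam : forall k, (0 < k)%N -> lam k.+1 = lam k + sig k *: (h1 (x k) - y k))
  (Hgam : forall k, (0 < k)%N -> gam k.+1 = gam k + sig k *: (h2 (x k) - z k))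
  (Hsig : forall k, (0 < k)%N ->
     if alm_delta h1 h2 x y z k <= tau * alm_delta h1 h2 x y z k.-1
     then sig k.+1 = sig k
     else sig k.+1 = Num.max (rho * sig k)
                      (Num.max (norm2 (lam k.+1) `^ (1 + alpha))
                               (norm2 (gam k.+1) `^ (1 + alpha)))) :
  (fun k => norm2 (h1 (x k) - y k) + norm2 (h2 (x k) - z k)) @ \oo --> 0
  /\ (forall xs : M, acc_point x xs ->
        acc_point (fun k => (x k, y k, z k)) (xs, h1 xs, h2 xs) /\ nonpos (h2 xs))
  /\ (compact [set: M] -> exists xs : M, acc_point x xs).
Proof.
have [c Hc] := Hbdd.
have [tau0 tau1] := andP Htau.
pose D := Phi - c.
pose u1 k := h1 (x k) + (sig k)^-1 *: lam k.
pose u2 k := h2 (x k) + (sig k)^-1 *: gam k.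
pose r1 k := h1 (x k) - y k.
pose r2 k := h2 (x k) - z k.
have sig_pos : forall k, 0 < sig k.
  elim=> [//|k IH]; case: k IH => [|k] IH; first by rewrite Hsig1.
  have := Hsig k.+1 isT; case: ifP => _ -> //.
  rewrite lt_max; apply/orP; left; rewrite mulr_gt0 //; lra.
have sig_step : forall k, sig k <= sig k.+1.
  case=> [|k]; first by rewrite Hsig1.
  have := Hsig k.+1 isT; case: ifP => _ -> //.
  rewrite le_max; apply/orP; left.
  have := sig_pos k.+1; rewrite -subr_ge0; nra.
have sig_mono : forall i j, (i <= j)%N -> sig i <= sig j.
  apply: (homo_leq (r := fun a b : R => a <= b)) => // a b d; exact: le_trans.
have stepB : forall k, (0 < k)%N ->
    sig k / 2 * norm2 (u1 k - y k) ^+ 2 <= D /\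
    sig k / 2 * norm2 (u2 k - z k) ^+ 2 <= D.
  move=> k k0; have [_ Hk] := Hsub k k0.
  have m1 : psi (y k) + sig k / 2 * norm2 (u1 k - y k) ^+ 2
            <= moreau psi (sig k) (u1 k).
    apply: lb_le_inf.
      by eexists; exists (y k).
    by move=> _ [w _ <-]; exact: Hy.
  have m2 : sig k / 2 * norm2 (u2 k - z k) ^+ 2
            <= moreau_nonpos (sig k) (u2 k).
    apply: lb_le_inf.
      by eexists; exists (z k) => //; exact: (Hz k).1.
    move=> _ [w Hw <-]; apply: ler_wpM2l.
      by rewrite divr_ge0 // ltW.
    have := (Hz k).2 w Hw; have := norm2_ge0 (u2 k - z k).
    rewrite -!/(u2 k); nra.
  have := Hc (x k) (y k); move: Hk; rewrite /subprob -/(u1 k) -/(u2 k) => Hk Hck.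
  have p1 : 0 <= sig k / 2 * norm2 (u1 k - y k) ^+ 2.
    by rewrite mulr_ge0 ?sqr_ge0 // divr_ge0 // ltW.
  have p2 : 0 <= sig k / 2 * norm2 (u2 k - z k) ^+ 2.
    by rewrite mulr_ge0 ?sqr_ge0 // divr_ge0 // ltW.
  rewrite /D; split; lra.
have D0 : 0 <= D.
  have [H _] := stepB 1%N isT; apply: le_trans H.
  by rewrite mulr_ge0 ?sqr_ge0 // divr_ge0 // ltW.
have lam_sq : forall k i, (0 < k)%N -> (lam k.+1 ord0 i) ^+ 2 <= 2 * D * sig k.
  move=> k i k0; have [H _] := stepB k k0.
  have E : lam k.+1 ord0 i = sig k * ((u1 k - y k) ord0 i).
    rewrite Hlam // /u1 !mxE; have := sig_pos k; rewrite lt0r => /andP[s0 _].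
    by field.
  have := entry_sq_le (u1 k - y k) i; have := sig_pos k.
  rewrite E; set a := (u1 k - y k) ord0 i; set n := norm2 (u1 k - y k).
  move=> sp asq; rewrite exprMn.
  apply: (@le_trans _ _ (sig k ^+ 2 * n ^+ 2)).
    by apply: ler_wpM2l => //; exact: sqr_ge0.
  rewrite (_ : sig k ^+ 2 * n ^+ 2 = (2 * sig k) * (sig k / 2 * n ^+ 2)); last by field.
  rewrite (_ : 2 * D * sig k = (2 * sig k) * D); last by ring.
  by apply: ler_wpM2l => //; rewrite mulr_ge0 // ltW.
have gam_sq : forall k i, (0 < k)%N -> (gam k.+1 ord0 i) ^+ 2 <= 2 * D * sig k.
  move=> k i k0; have [_ H] := stepB k k0.
  have E : gam k.+1 ord0 i = sig k * ((u2 k - z k) ord0 i).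
    rewrite Hgam // /u2 !mxE; have := sig_pos k; rewrite lt0r => /andP[s0 _].
    by field.
  have := entry_sq_le (u2 k - z k) i; have := sig_pos k.
  rewrite E; set a := (u2 k - z k) ord0 i; set n := norm2 (u2 k - z k).
  move=> sp asq; rewrite exprMn.
  apply: (@le_trans _ _ (sig k ^+ 2 * n ^+ 2)).
    by apply: ler_wpM2l => //; exact: sqr_ge0.
  rewrite (_ : sig k ^+ 2 * n ^+ 2 = (2 * sig k) * (sig k / 2 * n ^+ 2)); last by field.
  rewrite (_ : 2 * D * sig k = (2 * sig k) * D); last by ring.
  by apply: ler_wpM2l => //; rewrite mulr_ge0 // ltW.
have key : forall (A B s r : R), 0 < s -> A = B + s * r -> A ^+ 2 <= 2 * D * s ->
    B ^+ 2 <= 2 * D * s -> r ^+ 2 <= 8 * D / s.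
  move=> A B s r s0 -> HA HB.
  have H1 : s * (s * r ^+ 2) <= s * (8 * D).
    have : (s * r) ^+ 2 <= 8 * D * s by nra.
    by rewrite exprMn; nra.
  rewrite ler_pdivlMr // mulrC; by rewrite ler_pM2l in H1.
have r1_sq : forall k i, (2 <= k)%N -> (r1 k ord0 i) ^+ 2 <= 8 * D / sig k.
  case=> [//|[//|k]] i _.
  apply: (key (lam k.+3 ord0 i) (lam k.+2 ord0 i)) => //.
  - by rewrite Hlam // !mxE.
  - exact: lam_sq.
  - apply: le_trans (lam_sq k.+1 i isT) _.
    by apply: ler_wpM2l; [rewrite mulr_ge0 | exact: sig_step].
have r2_sq : forall k i, (2 <= k)%N -> (r2 k ord0 i) ^+ 2 <= 8 * D / sig k.
  case=> [//|[//|k]] i _.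
  apply: (key (gam k.+3 ord0 i) (gam k.+2 ord0 i)) => //.
  - by rewrite Hgam // !mxE.
  - exact: gam_sq.
  - apply: le_trans (gam_sq k.+1 i isT) _.
    by apply: ler_wpM2l; [rewrite mulr_ge0 | exact: sig_step].
pose del k := alm_delta h1 h2 x y z k.
have del_ge0 : forall k, 0 <= del k.
  by move=> k; rewrite /del /alm_delta le_max norm2_ge0.
have sum_le_del : forall k, norm2 (r1 k) + norm2 (r2 k) <= 2 * del k.
  move=> k; rewrite /del /alm_delta -/(r1 k) -/(r2 k).
  have := le_max (norm2 (r1 k)) (norm2 (r1 k)) (norm2 (r2 k)).
  have := le_max (norm2 (r2 k)) (norm2 (r1 k)) (norm2 (r2 k)).
  rewrite !lexx orbT /= => H2 H1; lra.
have Hres : forall e, 0 < e -> exists N, forall k, (N <= k)%N ->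
    norm2 (r1 k) + norm2 (r2 k) <= e.
  move=> e e0.
  have [inf|fin] := pselect (forall N, exists k, [/\ (N <= k)%N, (0 < k)%N &
                                   ~ (del k <= tau * del k.-1)]).
  - have grow : forall j : nat, exists K, sig 0%N * (1 + j%:R * (rho - 1)) <= sig K.
      elim=> [|j [K HK]]; first by exists 0%N; rewrite mul0r addr0 mulr1.
      have [k [Kk k0 bad]] := inf K.
      exists k.+1; have := Hsig k k0; rewrite -/(del k) -/(del k.-1).
      case: ifP => [/idP //|_ ->].
      rewrite le_max; apply/orP; left.
      have := sig_mono K k Kk; have : (0 <= j%:R :> R) by rewrite ler0n.
      rewrite -natr1; move: HK Hsig0 Hrho; set J := (j%:R : R) => HK s0 r1' J0 Kk'.
      have h0 : 0 <= J * (rho - 1) ^+ 2 * sig 0%N.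
        by apply: mulr_ge0; [apply: mulr_ge0; [|exact: sqr_ge0] | exact: ltW].
      have h : sig 0%N * (1 + (J + 1) * (rho - 1)) <= rho * (sig 0%N * (1 + J * (rho - 1))).
        rewrite -subr_ge0; apply: le_trans h0 _; rewrite le_eqVlt; apply/orP; left.
        apply/eqP; ring.
      apply: le_trans h _; apply: ler_wpM2l; first lra.
      exact: le_trans HK Kk'.
    have unb : forall B, exists K, B <= sig K.
      move=> B.
      have P0 : 0 < sig 0%N * (rho - 1) by rewrite mulr_gt0 // subr_gt0.
      have hj := archi_boundP (divr_ge0 (normr_ge0 B) (ltW P0)).
      have [K HK] := grow (Num.Def.archi_bound (`|B| / (sig 0%N * (rho - 1)))).
      exists K; apply: le_trans HK.
      move: hj; rewrite ltr_pdivrMr //.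
      set J := (Num.Def.archi_bound _)%:R => hj.
      have hB := ler_norm B.
      rewrite (_ : sig 0%N * (1 + J * (rho - 1)) = sig 0%N + J * (sig 0%N * (rho - 1))); last by ring.
      lra.
    pose B := 32 * ((m + q)%:R) * D / e ^+ 2.
    have [K HK] := unb B.
    exists (maxn K 2) => k Hk.
    have k2 : (2 <= k)%N by rewrite (leq_trans _ Hk) // leq_maxr.
    have Bk : B <= sig k.
      by apply: le_trans HK (sig_mono _ _ (leq_trans (leq_maxl _ _) Hk)).
    have sk := sig_pos k.
    have e2 : 0 < e / 2 by rewrite divr_gt0.
    have bnd : forall n : nat, (n <= m + q)%N ->
        Num.sqrt (n%:R * (8 * D / sig k)) <= e / 2.
      move=> n hn.
      rewrite -(ger0_norm (ltW e2)) -sqrtr_sqr ler_sqrt ?sqr_ge0 //.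
      have hn' : (n%:R : R) <= (m + q)%:R by rewrite ler_nat.
      have n0 : (0 : R) <= n%:R by rewrite ler0n.
      move: Bk; rewrite /B ler_pdivrMr ?exprn_gt0 // => Bk.
      rewrite mulrA ler_pdivrMr //.
      have hh1 : n%:R * (8 * D) <= (m + q)%:R * (8 * D).
        by apply: ler_wpM2r => //; rewrite mulr_ge0.
      apply: le_trans hh1 _.
      set Q := ((m + q)%:R : R) in Bk *.
      rewrite (_ : (e / 2) ^+ 2 * sig k = (sig k * e ^+ 2) / 4); last by field.
      rewrite ler_pdivlMr //; lra.
    have hm := le_trans (norm2_le (r1 k) _ (fun i => r1_sq k i k2)) (bnd m (leq_addr _ _)).
    have hq := le_trans (norm2_le (r2 k) _ (fun i => r2_sq k i k2)) (bnd q (leq_addl _ _)).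
    lra.
  - have [N HN] : exists N, forall k, (N <= k)%N -> (0 < k)%N -> del k <= tau * del k.-1.
      apply: contrapT => H; apply: fin => N.
      apply: contrapT => H2; apply: H; exists N => k Nk k0.
      by apply: contrapT => H3; apply: H2; exists k; split.
    pose N0 := N.+1.
    have geo : forall j, del (j + N0)%N <= tau ^+ j * del N0.
      elim=> [|j IH]; first by rewrite ?add0n expr0 mul1r.
      rewrite addSn; apply: le_trans (HN (j + N0).+1 _ isT) _.
        exact: leq_trans (leqnSn _) (leq_trans (leq_addl j N0) (leqnSn _)).
      rewrite /= exprS -mulrA; apply: ler_wpM2l; [exact: ltW | exact: IH].
    have tau_abs : `|tau| < 1 by rewrite ger0_norm // ltW.
    have e'0 : 0 < e / (2 * del N0 + 1).
      by rewrite divr_gt0 // ltr_wpDl // mulr_ge0.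
    have [J _ HJ] := (cvgrPdist_le _ _).1 (cvg_expr tau_abs) _ e'0.
    exists (J + N0)%N => k Hk.
    have hk : k = ((k - N0) + N0)%N by move: Hk; clear; lia.
    have Jk : (J <= k - N0)%N by move: Hk; clear; lia.
    have ht : tau ^+ (k - N0) <= e / (2 * del N0 + 1).
      have := HJ _ Jk; rewrite /= sub0r normrN ger0_norm //.
      exact: exprn_ge0 (ltW tau0).
    apply: le_trans (sum_le_del k) _.
    have g := geo (k - N0)%N; rewrite -hk in g.
    have g2 : 2 * del k <= 2 * (tau ^+ (k - N0) * del N0).
      by apply: ler_wpM2l g.
    apply: le_trans g2 _.
    have d0 := del_ge0 N0.
    have : tau ^+ (k - N0) * del N0 <= e / (2 * del N0 + 1) * del N0.
      by apply: ler_wpM2r.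
    have -> : e / (2 * del N0 + 1) * del N0 = (e * del N0) / (2 * del N0 + 1) by ring.
    have hpos : 0 < 2 * del N0 + 1 by rewrite ltr_wpDl // mulr_ge0.
    move=> H; have : 2 * (tau ^+ (k - N0) * del N0) <= 2 * (e * del N0) / (2 * del N0 + 1).
      by rewrite -mulrA ler_wpM2l.
    move=> H'; apply: le_trans H' _.
    rewrite ler_pdivrMr //; lra.
have part1 : (fun k => norm2 (h1 (x k) - y k) + norm2 (h2 (x k) - z k)) @ \oo --> 0.
  apply/cvgrPdist_le => e e0; have [N HN] := Hres e e0.
  exists N => // k /= Nk.
  rewrite sub0r normrN ger0_norm; last by rewrite addr_ge0 // norm2_ge0.
  exact: HN.
split; first exact: part1.
split.
  move=> xs [phi [phi_incr Hphi]].
  have phi_ge : forall n, (n <= phi n)%N.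
    elim=> [//|n IH]; exact: leq_ltn_trans IH (phi_incr n).
  have Hx : (fun n => x (phi n)) @ \oo --> xs := Hphi.
  have Hy1 : (fun n => y (phi n)) @ \oo --> h1 xs.
    have Hh : (fun n => h1 (x (phi n))) @ \oo --> h1 xs := cvg_comp _ _ Hx (Hh1 xs).
    apply/cvgrPdist_le => e e0.
    have e2 : 0 < e / 2 by rewrite divr_gt0.
    have [N1 _ H1] := (cvgrPdist_le _ _).1 Hh _ e2.
    have [N2 H2] := Hres _ e2.
    exists (maxn N1 N2) => // n /= Hn.
    have n1 : (N1 <= n)%N by move: Hn; clear; lia.
    have n2 : (N2 <= phi n)%N by have := phi_ge n; move: Hn; clear; lia.
    have := H1 _ n1; have := H2 _ n2; rewrite /r1 /r2 /= => A B.
    have C := mxnorm_le_norm2 (h1 (x (phi n)) - y (phi n)).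
    have := norm2_ge0 (h2 (x (phi n)) - z (phi n)).
    have -> : h1 xs - y (phi n) = (h1 xs - h1 (x (phi n))) + (h1 (x (phi n)) - y (phi n)).
      by rewrite addrA subrK.
    move=> D'; apply: le_trans (ler_normD _ _) _; lra.
  have Hz1 : (fun n => z (phi n)) @ \oo --> h2 xs.
    have Hh : (fun n => h2 (x (phi n))) @ \oo --> h2 xs := cvg_comp _ _ Hx (Hh2 xs).
    apply/cvgrPdist_le => e e0.
    have e2 : 0 < e / 2 by rewrite divr_gt0.
    have [N1 _ H1] := (cvgrPdist_le _ _).1 Hh _ e2.
    have [N2 H2] := Hres _ e2.
    exists (maxn N1 N2) => // n /= Hn.
    have n1 : (N1 <= n)%N by move: Hn; clear; lia.
    have n2 : (N2 <= phi n)%N by have := phi_ge n; move: Hn; clear; lia.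
    have := H1 _ n1; have := H2 _ n2; rewrite /r1 /r2 /= => A B.
    have C := mxnorm_le_norm2 (h2 (x (phi n)) - z (phi n)).
    have := norm2_ge0 (h1 (x (phi n)) - y (phi n)).
    have -> : h2 xs - z (phi n) = (h2 xs - h2 (x (phi n))) + (h2 (x (phi n)) - z (phi n)).
      by rewrite addrA subrK.
    move=> D'; apply: le_trans (ler_normD _ _) _; lra.
  split.
    exists phi; split => //.
    exact: (cvg_pair (cvg_pair Hx Hy1) Hz1).
  move=> i; rewrite leNgt; apply/negP => hpos.
  set a := h2 xs ord0 i in hpos.
  have a2 : 0 < a / 2 by rewrite divr_gt0.
  have [N _ HN] := (cvgrPdist_le _ _).1 Hz1 _ a2.
  have := le_trans (entry_le_mxnorm _ i) (HN N (leqnn N)).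
  rewrite !mxE -/a ler_norml => /andP[_ h].
  have := (Hz (phi N)).1 i; lra.
move=> Hcomp.
have [xs [_ cl]] := Hcomp (x @ \oo) _ filterT.
have Hex : forall nN : nat * nat, exists k, (nN.2 < k)%N /\ ball xs (nN.1.+1%:R^-1) (x k).
  move=> [n N].
  have hb : nbhs xs (ball xs (n.+1%:R^-1)) by apply: nbhsx_ballx; rewrite invr_gt0.
  have hA : (x @ \oo) [set x k | k in [set k | (N < k)%N]].
    exists N.+1 => // k /= Hk; by exists k.
  have [p [[k /= Nk <-] Bk]] := cl _ _ hA hb.
  by exists k.
have [g Hg] := choice Hex.
pose fix phi n := if n is n'.+1 then g (n, phi n') else g (0%N, 0%N).
exists xs, phi; split.
  by move=> n /=; exact: (Hg (n.+1, phi n)).1.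
apply/cvg_ballP => e e0.
have ei : 0 < e^-1 by rewrite invr_gt0.
have hb := archi_boundP (ltW ei).
exists (Num.Def.archi_bound e^-1) => // n /= Hn.
have Hb : ball xs (n.+1%:R^-1) (x (phi n)).
  by case: n Hn => [|n] Hn; [exact: (Hg (0, 0)%N).2 | exact: (Hg (n.+1, phi n)).2].
apply: le_ball Hb.
rewrite -(invrK e) lef_pV2 ?posrE ?invr_gt0 // ?ltr0n //.
apply: ltW; apply: lt_le_trans hb _.
by rewrite ler_nat (leq_trans Hn).
Qed.
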